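(* Let $F^*$ be the set of activated blue edges of an optimal solution of an instance of $\mathsf{StackMST}(\gamma,\Delta)$ with red tree $T$ of height $h$ rooted at its center $v_0$, and let $r(F^* )$ be its (optimal) revenue. Then $$r(F^* )\le c(T)-\sum_{i=1}^h\ \sum_{H\in\mathrm{comp}(G^*_i)}\ \min_{v\in V(H)}c_i(v_0,v).$$
   Context: $\mathsf{StackMST}(\gamma,\Delta)$: given a tree $T=(V,E(T))$ with red edge costs $c(e)\ge0$, activation costs $\gamma(e)\ge0$ for every pair $e\notin E(T)$ of vertices, and a budget $\Delta$, the leader selects a set $F$ of such pairs with $\sum_{e\in F}\gamma(e)\le\Delta$ and prices $p:F\to\mathbb{R}^+$; the follower computes a minimum spanning tree $M$ of $(V,E(T)\cup F)$ (weights $c$ on red edges, $p$ on $F$), breaking ties in favor of the leader; the leader's revenue $\sum_{e\in F\cap M}p(e)$ is to be maximized. $c(T)$ is the total red cost. Root $T$ at its center $v_0$; $h$ is its height. For $1\le i\le h$, let $V_i=\{v_1,\dots,v_{\ell_i}\}$ be the vertices at depth $i$ and $E_i$ the set of edges joining vertices of $V_i$ to their parents. $T_i$ is the star centered at $v_0$ with leaves $v_1,\dots,v_{\ell_i}$, with $c_i(v_0,v)=c(u,v)$ where $u$ is the parent of $v$ in $T$; by convention $c_i(v_0,v_0)=0$. Let $\hat T_0,\hat T_1,\dots,\hat T_{\ell_i}$ be the connected components of $T-E_i$, with $v_0\in V(\hat T_0)$ and $v_j\in V(\hat T_j)$ for $j\ge1$. Let $F^*_i$ be the set of pairs $(v_j,v_q)$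 such that there is $(u,v)\in F^*$ with $u\in V(\hat T_j)$, $v\in V(\hat T_q)$, $j\ne q$, and let $G^*_i=(\{v_0,\dots,v_{\ell_i}\},F^*_i)$; $\mathrm{comp}(G^*_i)$ denotes its set of connected components. *)

(* Defs.v *)
From mathcomp Require Import all_boot all_order all_algebra.
Set Implicit Arguments. Unset Strict Implicit. Unset Printing Implicit Defensive.
Import Order.TTheory GRing.Theory Num.Theory.
Local Open Scope ring_scope.

Section StackMST.
Variable V : finType.

Definition is_pair (e : {set V}) : bool := #|e| == 2%N.

Definition adjE (M : {set {set V}}) : rel V := fun x y => [set x; y] \in M.

Definition spanning_tree (E M : {set {set V}}) : Prop :=
  [/\ M \subset E, {in M, forall e, is_pair e},
      (forall x y, connect (adjE M) x y) & #|M| = (#|V|).-1].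

Definition is_tree (ET : {set {set V}}) : Prop := spanning_tree [set e | is_pair e] ET.

Definition ball (M : {set {set V}}) (k : nat) (x : V) : {set V} :=
  iter k (fun S => S :|: [set y | [exists z in S, adjE M z y]]) [set x].
Definition dist (M : {set {set V}}) (x y : V) : nat :=
  find (fun k => y \in ball M k x) (iota 0 #|V|).
Definition ecc (M : {set {set V}}) (v : V) : nat := \max_(u : V) dist M v u.
Definition is_center (ET : {set {set V}}) (v0 : V) : Prop :=
  forall u, (ecc ET v0 <= ecc ET u)%N.
Definition height (ET : {set {set V}}) (v0 : V) : nat := ecc ET v0.
Definition depth (ET : {set {set V}}) (v0 v : V) : nat := dist ET v0 v.

Variable R : realFieldType.

(* follower's weights: red cost on tree edges, price on blue edges *)
Definition weight (ET : {set {set V}}) (c p : {set V} -> R) (e : {set V}) : R :=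
  if e \in ET then c e else p e.

Definition is_MST (E : {set {set V}}) (w : {set V} -> R) (M : {set {set V}}) : Prop :=
  spanning_tree E M /\
  forall M', spanning_tree E M' -> \sum_(e in M) w e <= \sum_(e in M') w e.

Definition rev_of (F : {set {set V}}) (p : {set V} -> R) (M : {set {set V}}) : R :=
  \sum_(e in F :&: M) p e.

(* follower's choice: an MST, ties broken in favour of the leader *)
Definition follower_tree (ET : {set {set V}}) (c : {set V} -> R)
    (F : {set {set V}}) (p : {set V} -> R) (M : {set {set V}}) : Prop :=
  is_MST (ET :|: F) (weight ET c p) M /\
  forall M', is_MST (ET :|: F) (weight ET c p) M' -> rev_of F p M' <= rev_of F p M.

Definition leader_revenue (ET : {set {set V}}) (c : {set V} -> R) (F : {set {set V}}) (p : {set V} -> R) (r : R) : Prop :=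
  exists M, follower_tree ET c F p M /\ r = rev_of F p M.

Definition feasible (ET : {set {set V}}) (gamma : {set V} -> R) (Delta : R)
    (F : {set {set V}}) (p : {set V} -> R) : Prop :=
  [/\ {in F, forall e, is_pair e /\ e \notin ET},
      \sum_(e in F) gamma e <= Delta & {in F, forall e, 0 <= p e}].

Definition optimal (ET : {set {set V}}) (c gamma : {set V} -> R) (Delta : R) (F : {set {set V}}) (p : {set V} -> R) (r : R) : Prop :=
  [/\ feasible ET gamma Delta F p, leader_revenue ET c F p r &
      forall F' p' r', feasible ET gamma Delta F' p' -> leader_revenue ET c F' p' r' ->
        r' <= r].

Definition level_edges (ET : {set {set V}}) (v0 : V) (i : nat) : {set {set V}} :=
  [set e in ET | [exists u in e, exists v in e,
     (depth ET v0 u == i.-1) && (depth ET v0 v == i)]].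
Definition W_i (ET : {set {set V}}) (v0 : V) (i : nat) : {set V} :=
  v0 |: [set v | depth ET v0 v == i].
Definition hatcomp (ET : {set {set V}}) (v0 : V) (i : nat) (a x : V) : bool :=
  connect (adjE (ET :\: level_edges ET v0 i)) a x.
Definition Gi_rel (ET : {set {set V}}) (v0 : V) (F : {set {set V}}) (i : nat) : rel V := fun a b =>
  [&& a \in W_i ET v0 i, b \in W_i ET v0 i, a != b &
   [exists u, exists v, [&& [set u; v] \in F, hatcomp ET v0 i a u & hatcomp ET v0 i b v]]].
Definition comps (ET : {set {set V}}) (v0 : V) (F : {set {set V}}) (i : nat) : {set {set V}} :=
  [set [set y in W_i ET v0 i | connect (Gi_rel ET v0 F i) x y] | x in W_i ET v0 i].

Definition parent (ET : {set {set V}}) (v0 : V) (v : V) : V :=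
  odflt v [pick u | ([set u; v] \in ET) && (depth ET v0 u == (depth ET v0 v).-1)].
(* c_i(v0, v) for v at depth i; c_i(v0,v0) = 0 *)
Definition ci (ET : {set {set V}}) (c : {set V} -> R) v0 (v : V) : R :=
  if v == v0 then 0 else c [set parent ET v0 v; v].

Definition minc (f : V -> R) (x0 : V) (H : {set V}) : R :=
  \big[Num.min/f (odflt x0 [pick v in H])]_(v in H) f v.

End StackMST.

(* Main.v *)
Require Import Defs.
From mathcomp Require Import all_boot all_order all_algebra.
From mathcomp Require Import zify.
Import Order.TTheory GRing.Theory Num.Theory.
Set Implicit Arguments. Unset Strict Implicit. Unset Printing Implicit Defensive.

Lemma ballS (V : finType) (M : {set {set V}}) k x y :
  (y \in ball M k.+1 x) = (y \in ball M k x) || [exists z in ball M k x, adjE M z y].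
Proof. by rewrite /ball iterS -/(ball M k x) in_setU inE. Qed.

Lemma ball_mono (V : finType) (M : {set {set V}}) k k' x y :
  (k <= k')%N -> y \in ball M k x -> y \in ball M k' x.
Proof.
move=> /subnKC <-; elim: (k' - k)%N => [|n IH]; first by rewrite addn0.
by move=> H; rewrite addnS ballS IH.
Qed.

Lemma path_ball (V : finType) (M : {set {set V}}) x p :
  path (adjE M) x p -> last x p \in ball M (size p) x.
Proof.
elim/last_ind: p => [|p z IH]; first by rewrite /= /ball /= set11.
rewrite rcons_path last_rcons size_rcons => /andP[/IH Hp Hz].
by rewrite ballS; apply/orP; right; apply/existsP; exists (last x p); rewrite Hp.
Qed.

Lemma conn_ball (V : finType) (M : {set {set V}}) x y :
  connect (adjE M) x y -> exists2 k, (k < #|V|)%N & y \in ball M k x.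
Proof.
case/connectP=> p Hp ->; case: (shortenP Hp) => p' Hp' Hu _.
exists (size p'); last exact: path_ball.
have := max_card (mem (x :: p')); rewrite (card_uniqP Hu) /=. by [].
Qed.

Lemma depth_spec (V : finType) (ET : {set {set V}}) v0 y :
  (forall x y, connect (adjE ET) x y) ->
  [/\ y \in ball ET (depth ET v0 y) v0, (depth ET v0 y < #|V|)%N &
      forall k, y \in ball ET k v0 -> (depth ET v0 y <= k)%N].
Proof.
move=> hc; have [k kV Hk] := conn_ball (hc v0 y).
set P := fun k => y \in ball ET k v0.
have hasP : has P (iota 0 #|V|) by apply/hasP; exists k; rewrite ?mem_iota.
have := has_find P (iota 0 #|V|); rewrite hasP size_iota => /esym Hlt.
have := nth_find 0 hasP; rewrite nth_iota // add0n => Hb.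
rewrite /depth /dist; split => // k' Hk'.
case: (ltnP k' #|V|) => Hk'V; last by apply: ltnW; apply: leq_trans Hlt Hk'V.
rewrite leqNgt; apply/negP => Hf.
by have := before_find 0 Hf; rewrite nth_iota // add0n /P Hk'.
Qed.

Lemma depth0P (V : finType) (ET : {set {set V}}) v0 y :
  (forall x y, connect (adjE ET) x y) -> (depth ET v0 y == 0%N) = (y == v0).
Proof.
move=> hc; apply/eqP/eqP => [H|->].
  have [Hb _ Hm] := depth_spec v0 y hc.
  by move: Hb; rewrite H /ball /= inE => /eqP.
have [Hb _ Hm] := depth_spec v0 v0 hc.
by apply/eqP; rewrite -leqn0; apply: Hm; rewrite /ball /= set11.
Qed.

Lemma parent_ex (V : finType) (ET : {set {set V}}) v0 y :
  (forall x y, connect (adjE ET) x y) -> y != v0 ->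
  exists z, ([set z; y] \in ET) && (depth ET v0 z == (depth ET v0 y).-1).
Proof.
move=> hc yv0; have [Hb _ Hm] := depth_spec v0 y hc.
have := depth0P v0 y hc; rewrite (negbTE yv0).
case E: (depth ET v0 y) => [|k] // _.
move: Hb; rewrite E ballS => /orP[/Hm|]; first by rewrite E ltnn.
case/existsP => z /andP[zk adj]; exists z; rewrite -[_ \in ET]/(adjE ET z y) adj /=.
have [_ _ Hmz] := depth_spec v0 z hc.
rewrite eqn_leq Hmz //=; rewrite leqNgt; apply/negP => Hlt.
have [Hbz _ _] := depth_spec v0 z hc.
have : y \in ball ET (depth ET v0 z).+1 v0.
  by rewrite ballS; apply/orP; right; apply/existsP; exists z; rewrite Hbz.
move/(ball_mono Hlt)/Hm; by rewrite E ltnn.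
Qed.

Lemma parent_spec (V : finType) (ET : {set {set V}}) v0 y :
  (forall x y, connect (adjE ET) x y) -> y != v0 ->
  [set parent ET v0 y; y] \in ET /\ depth ET v0 (parent ET v0 y) = (depth ET v0 y).-1.
Proof.
move=> hc yv0; rewrite /parent; case: pickP => [z /andP[H1 /eqP H2]|H] //=.
by have [z Hz] := parent_ex hc yv0; move: (H z); rewrite Hz.
Qed.

Definition pe (V : finType) (ET : {set {set V}}) v0 z := [set parent ET v0 z; z].

Lemma depth_parent (V : finType) (ET : {set {set V}}) v0 y :
  (forall x y, connect (adjE ET) x y) -> y != v0 ->
  (0 < depth ET v0 y)%N /\ depth ET v0 (parent ET v0 y) = (depth ET v0 y).-1.
Proof.
move=> hc yv0; have [_ ->] := parent_spec hc yv0; split => //.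
by rewrite lt0n depth0P.
Qed.

Lemma pe_inj (V : finType) (ET : {set {set V}}) v0 :
  (forall x y, connect (adjE ET) x y) -> {in [set~ v0] &, injective (pe ET v0)}.
Proof.
move=> hc z z'; rewrite !in_setC1 => zv z'v E.
apply/eqP; apply/negP => /negP nz.
have h1 : z \in pe ET v0 z' by rewrite -E /pe !inE eqxx orbT.
have h2 : z' \in pe ET v0 z by rewrite E /pe !inE eqxx orbT.
move: h1 h2; rewrite /pe !inE (negbTE nz) [z' == z]eq_sym (negbTE nz) !orbF => /eqP e1 /eqP e2.
have [d1 p1] := depth_parent hc zv; have [d2 p2] := depth_parent hc z'v.
rewrite -e1 in p2; rewrite -e2 in p1. lia.
Qed.

Lemma pe_in (V : finType) (ET : {set {set V}}) v0 z :
  (forall x y, connect (adjE ET) x y) -> z != v0 -> pe ET v0 z \in ET.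
Proof. by move=> hc zv; have [] := parent_spec hc zv. Qed.

Lemma pe_surj (V : finType) (ET : {set {set V}}) v0 e :
  is_tree ET -> e \in ET -> exists2 z, z != v0 & e = pe ET v0 z.
Proof.
case=> _ _ hc hcard eE.
have sub : pe ET v0 @: [set~ v0] \subset ET.
  by apply/subsetP => f /imsetP[z]; rewrite in_setC1 => zv ->; apply: pe_in.
have : pe ET v0 @: [set~ v0] == ET.
  by rewrite eqEcard sub card_in_imset ?cardsC1 ?hcard //=; apply: pe_inj.
move=> /eqP E; move: eE; rewrite -{1}E => /imsetP[z]; rewrite in_setC1 => zv ->.
by exists z.
Qed.

Definition anc (V : finType) (ET : {set {set V}}) v0 i x :=
  if (i <= depth ET v0 x)%N then iter (depth ET v0 x - i) (parent ET v0) x else v0.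

Lemma depth_iter (V : finType) (ET : {set {set V}}) v0 x k :
  (forall x y, connect (adjE ET) x y) -> (k <= depth ET v0 x)%N ->
  depth ET v0 (iter k (parent ET v0) x) = (depth ET v0 x - k)%N.
Proof.
move=> hc; elim: k => [|k IH] Hk; first by rewrite subn0.
have IH' := IH (ltnW Hk).
have nv : iter k (parent ET v0) x != v0.
  by rewrite -(depth0P v0 _ hc) IH'; lia.
have [_ ->] := depth_parent hc nv; rewrite IH'; lia.
Qed.

Lemma adjE_sym (V : finType) (M : {set {set V}}) x y : adjE M x y = adjE M y x.
Proof. by rewrite /adjE setUC. Qed.

Lemma pe_notlevel (V : finType) (ET : {set {set V}}) v0 i w :
  (forall x y, connect (adjE ET) x y) -> w != v0 -> depth ET v0 w != i -> (1 <= i)%N ->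
  pe ET v0 w \notin level_edges ET v0 i.
Proof.
move=> hc wv di i1; have [d1 dp] := depth_parent hc wv.
rewrite /level_edges inE negb_and orbC; apply/orP; left.
apply/negP => /existsP[u /andP[uin /existsP[v /andP[vin /andP[/eqP du /eqP dv]]]]].
move: uin vin; rewrite /pe !inE => /orP[] /eqP eu /orP[] /eqP ev; subst u v;
  move: di du dv; rewrite ?dp; lia.
Qed.

Lemma step_conn (V : finType) (ET : {set {set V}}) v0 i w :
  (forall x y, connect (adjE ET) x y) -> w != v0 -> depth ET v0 w != i -> (1 <= i)%N ->
  connect (adjE (ET :\: level_edges ET v0 i)) (parent ET v0 w) w.
Proof.
move=> hc wv di i1; apply: connect1.
rewrite /adjE in_setD pe_notlevel //=; exact: pe_in.
Qed.

Lemma iter_conn (V : finType) (ET : {set {set V}}) v0 i x k :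
  (forall x y, connect (adjE ET) x y) -> (1 <= i)%N -> (k <= depth ET v0 x)%N ->
  (forall j, (j < k)%N -> (depth ET v0 x - j)%N != i) ->
  connect (adjE (ET :\: level_edges ET v0 i)) (iter k (parent ET v0) x) x.
Proof.
move=> hc i1; elim: k => [|k IH] Hk Hj; first exact: connect0.
apply: connect_trans (IH (ltnW Hk) (fun j hj => Hj j (ltnW hj))).
rewrite iterS; apply: step_conn => //.
  by rewrite -(depth0P v0 _ hc) depth_iter //; try lia.
have := Hj k (ltnSn k); rewrite depth_iter //; exact: ltnW.
Qed.

Lemma anc_conn (V : finType) (ET : {set {set V}}) v0 i x :
  (forall x y, connect (adjE ET) x y) -> (1 <= i)%N ->
  hatcomp ET v0 i (anc ET v0 i x) x.
Proof.
move=> hc i1; rewrite /hatcomp /anc; case: ifP => Hi.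
  apply: iter_conn => //; first exact: leq_subr.
  move=> j hj; apply/eqP; lia.
have E : iter (depth ET v0 x) (parent ET v0) x = v0.
  by apply/eqP; rewrite -(depth0P v0 _ hc) depth_iter // subnn.
rewrite -[X in connect _ X _]E.
apply: iter_conn => //; move=> j hj; apply/eqP; move/negbT: Hi; rewrite -ltnNge => Hi; lia.
Qed.

Lemma anc_W (V : finType) (ET : {set {set V}}) v0 i x :
  (forall x y, connect (adjE ET) x y) -> (1 <= i)%N -> anc ET v0 i x \in W_i ET v0 i.
Proof.
move=> hc i1; rewrite /anc /W_i; case: ifP => Hi; last by rewrite setU11.
by rewrite in_setU1 inE depth_iter ?leq_subr // orbC; apply/orP; left; apply/eqP; lia.
Qed.

Lemma anc_id (V : finType) (ET : {set {set V}}) v0 i a :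
  (forall x y, connect (adjE ET) x y) -> (1 <= i)%N -> a \in W_i ET v0 i ->
  anc ET v0 i a = a.
Proof.
move=> hc i1; rewrite /W_i in_setU1 inE => /orP[/eqP ->|/eqP da].
  have /eqP d0 : depth ET v0 v0 == 0%N by rewrite depth0P.
  by rewrite /anc d0 ifF //; apply/negbTE; rewrite -ltnNge.
by rewrite /anc da leqnn subnn.
Qed.

Lemma anc_parent (V : finType) (ET : {set {set V}}) v0 i y :
  (forall x y, connect (adjE ET) x y) -> (1 <= i)%N -> y != v0 -> depth ET v0 y != i ->
  anc ET v0 i (parent ET v0 y) = anc ET v0 i y.
Proof.
move=> hc i1 yv di; have [d1 dp] := depth_parent hc yv.
rewrite /anc dp; case: (ltnP (depth ET v0 y) i) => H.
  by rewrite !ifF //; apply/negbTE; rewrite -ltnNge; lia.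
rewrite !ifT; try lia.
have -> : (depth ET v0 y - i = ((depth ET v0 y).-1 - i).+1)%N by move/eqP: di; lia.
by rewrite iterSr.
Qed.

Lemma cross (T : finType) (e : rel T) (S : pred T) x y :
  connect e x y -> ~~ S x -> S y -> exists a b, [/\ e a b, ~~ S a & S b].
Proof.
case/connectP => p; elim: p x => [|y' p IH] x /=; first by move=> _ -> /negbTE ->.
case/andP => exy' pp ey nSx Sy.
case: (boolP (S y')) => Sy'; first by exists x, y'.
exact: IH pp ey Sy' Sy.
Qed.

Lemma in_comp (T : finType) (W : {set T}) (P : pred T) x :
  (x \in [set y in W | P y]) = (x \in W) && P x.
Proof. by rewrite inE. Qed.

Lemma tree_conn (V : finType) (ET : {set {set V}}) :
  is_tree ET -> forall x y, connect (adjE ET) x y.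
Proof. by case. Qed.

Lemma cut_ex (V : finType) (ET : {set {set V}}) v0 (F M : {set {set V}}) i H :
  is_tree ET -> (forall x y, connect (adjE M) x y) -> M \subset ET :|: F ->
  (1 <= i)%N -> H \in comps ET v0 F i -> v0 \notin H ->
  exists2 z, z \in H & pe ET v0 z \in M.
Proof.
move=> tr hM hMs i1 /imsetP[x0 x0W ->] v0H.
have hc := tree_conn tr.
set G := Gi_rel ET v0 F i.
have v0W : v0 \in W_i ET v0 i by rewrite /W_i setU11.
set S := fun x => anc ET v0 i x \in [set y in W_i ET v0 i | connect G x0 y].
have h1 : ~~ S v0 by rewrite /S anc_id.
have h2 : S x0 by rewrite /S anc_id // inE x0W connect0.
have [a [b [ab nSa Sb]]] := @cross _ _ S v0 x0 (hM v0 x0) h1 h2.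
have abM : [set a; b] \in M := ab.
move: nSa Sb; rewrite /S !in_comp !anc_W //= => nSa Sb.
have nab : anc ET v0 i a != anc ET v0 i b.
  by apply/eqP => E; move: nSa; rewrite E Sb.
have := subsetP hMs _ abM; rewrite in_setU => /orP[abT|abF].
  have [z zv ez] := pe_surj v0 tr abT.
  have ain : a \in pe ET v0 z by rewrite -ez !inE eqxx.
  have bin : b \in pe ET v0 z by rewrite -ez !inE eqxx orbT.
  case: (eqVneq (depth ET v0 z) i) => dz; last first.
    move: ain bin nab; rewrite /pe !inE => /orP[]/eqP-> /orP[]/eqP->;
      rewrite ?anc_parent ?eqxx //.
  have zW : z \in W_i ET v0 i by rewrite /W_i in_setU1 inE dz eqxx orbT.
  move: ain bin nab Sb; rewrite /pe !inE => /orP[]/eqP-> /orP[]/eqP->;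
      rewrite ?eqxx //.
  - have [_ dp] := depth_parent hc zv.
    have pW : anc ET v0 i (parent ET v0 z) = v0.
      by rewrite /anc dp dz ifF //; apply/negbTE; rewrite -ltnNge; lia.
    move=> _ Hz; exists z; last by rewrite -/(pe ET v0 z) -ez.
    by rewrite in_comp zW; move: Hz; rewrite anc_id.
  - have [_ dp] := depth_parent hc zv.
    have pW : anc ET v0 i (parent ET v0 z) = v0.
      by rewrite /anc dp dz ifF //; apply/negbTE; rewrite -ltnNge; lia.
    move=> _; rewrite pW => Hv0. by move: v0H; rewrite in_comp Hv0 v0W.
exfalso; apply: (negP nSa).
apply: connect_trans Sb _; apply: connect1.
rewrite /G /Gi_rel !anc_W //= eq_sym nab /=.
apply/existsP; exists b; apply/existsP; exists a.
by rewrite setUC abF !anc_conn.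
Qed.
Local Open Scope ring_scope.

Lemma sum_sub (R : numDomainType) (I : finType) (P Q : pred I) (F : I -> R) :
  (forall i, P i -> Q i) -> (forall i, Q i -> 0 <= F i) ->
  \sum_(i | P i) F i <= \sum_(i | Q i) F i.
Proof.
move=> PQ F0; rewrite [X in _ <= X](bigID P) /=.
rewrite (eq_bigl P); last by move=> i; case: (boolP (P i)) => Pi; rewrite ?andbT ?andbF ?(PQ i Pi).
rewrite -[X in X <= _]addr0 lerD2l; apply: sumr_ge0 => i /andP[/F0]//.
Qed.

Lemma bigmin_le_seq (R : realDomainType) (T : eqType) (s : seq T) (f : T -> R) idx z :
  z \in s -> \big[Num.min/idx]_(v <- s) f v <= f z.
Proof.
elim: s => [|a s IH] //=; rewrite inE big_cons => /orP[/eqP->|zs].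
  by rewrite ge_min lexx.
by rewrite ge_min IH // orbT.
Qed.

Lemma minc_le (R : realFieldType) (V : finType) (f : V -> R) x0 (H : {set V}) z :
  z \in H -> minc f x0 H <= f z.
Proof.
move=> zH; rewrite /minc -big_filter; apply: bigmin_le_seq.
by rewrite mem_filter zH mem_index_enum.
Qed.

Lemma Gi_sym (V : finType) (ET : {set {set V}}) v0 F i :
  symmetric (Gi_rel ET v0 F i).
Proof.
move=> a b; rewrite /Gi_rel; apply/idP/idP =>
  /and4P[aW bW ab /existsP[u /existsP[v /and3P[uv au bv]]]];
  rewrite aW bW eq_sym ab /=; apply/existsP; exists v; apply/existsP; exists u;
  by rewrite setUC uv au bv.
Qed.

Lemma comps_disj (V : finType) (ET : {set {set V}}) v0 F i H H' z :
  H \in comps ET v0 F i -> H' \in comps ET v0 F i -> z \in H -> z \in H' -> H = H'.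
Proof.
move=> /imsetP[x0 _ ->] /imsetP[x1 _ ->]; rewrite !in_comp => /andP[_ c0] /andP[_ c1].
have sy := sym_connect_sym (Gi_sym ET v0 F i).
apply/setP => y; rewrite !in_comp; congr andb; apply/idP/idP => h.
  by apply: connect_trans h; apply: connect_trans c1 _; rewrite sy.
by apply: connect_trans h; apply: connect_trans c0 _; rewrite sy.
Qed.

Lemma ci_ge0 (R : realFieldType) (V : finType) (ET : {set {set V}}) v0 (c : {set V} -> R) z :
  is_tree ET -> (forall e, e \in ET -> 0 <= c e) -> 0 <= ci ET c v0 z.
Proof.
move=> tr c0; rewrite /ci; case: eqP => // /eqP zv.
by apply: c0; apply: pe_in zv; apply: tree_conn.
Qed.

Lemma level_bound (R : realFieldType) (V : finType) (ET : {set {set V}}) v0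
    (c : {set V} -> R) (F M : {set {set V}}) i :
  is_tree ET -> (forall x y, connect (adjE M) x y) -> M \subset ET :|: F ->
  (forall e, e \in ET -> 0 <= c e) -> (1 <= i)%N ->
  \sum_(H in comps ET v0 F i) minc (ci ET c v0) v0 H <=
  \sum_(z | (depth ET v0 z == i) && (pe ET v0 z \in M)) ci ET c v0 z.
Proof.
move=> tr hM hMs c0 i1.
rewrite [X in X <= _](bigID (fun H : {set V} => v0 \in H)) /=.
rewrite -[X in _ <= X]add0r; apply: lerD.
  apply: sumr_le0 => H /andP[_ vH].
  by apply: le_trans (minc_le _ _ vH) _; rewrite /ci eqxx.
pose rep (H : {set V}) := odflt v0 [pick z in H | pe ET v0 z \in M].
have repP : forall H, H \in comps ET v0 F i -> v0 \notin H ->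
    rep H \in H /\ pe ET v0 (rep H) \in M.
  move=> H HC vH; rewrite /rep; case: pickP => [z /andP[]|] //=.
  by have [z zH zM] := cut_ex tr hM hMs i1 HC vH => /(_ z); rewrite zH zM.
pose A := [set H in comps ET v0 F i | v0 \notin H].
apply: (@le_trans _ _ (\sum_(H in A) ci ET c v0 (rep H))).
  rewrite (eq_bigl (mem A)) => [|H]; last by rewrite !inE.
  apply: ler_sum => H HA; have : H \in A := HA.
  by rewrite inE => /andP[HC vH]; apply: minc_le; case: (repP H HC vH).
rewrite -(big_imset (h := rep) (A := mem A) (ci ET c v0)) /=; last first.
  move=> H H'; rewrite !inE => /andP[HC vH] /andP[HC' vH'] E.
  have [r1 _] := repP H HC vH; have [r2 _] := repP H' HC' vH'.
  by apply: (comps_disj HC HC' r1); rewrite E.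
apply: sum_sub => [z /imsetP[H]|z _]; last exact: ci_ge0.
rewrite inE => /andP[HC vH] ->; have [r1 r2] := repP H HC vH.
rewrite r2 andbT.
have : rep H \in W_i ET v0 i by move: HC r1 => /imsetP[x0 _ ->]; rewrite in_comp => /andP[].
rewrite /W_i in_setU1 inE => /orP[/eqP E|//].
by move: vH; rewrite -E r1.
Qed.

Lemma sum_ind_nat (R : realFieldType) m n k (x : R) : (m <= n)%N ->
  \sum_(m <= i < n) (if k == i then x else 0) = if (m <= k < n)%N then x else 0.
Proof.
elim: n => [|n IH] Hmn.
  by rewrite big_geq //; case: ifP => //; lia.
case: (ltnP m n.+1) => H; last first.
  by rewrite big_geq //; case: ifP => //; lia.
rewrite big_nat_recr //= IH //.
case: (eqVneq k n) => [->|kn]; first by rewrite ifF ?addr0 ?ifT ?add0r //; lia.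
rewrite addr0; move/eqP: kn => kn.
by congr (if _ then _ else _); apply/idP/idP => /andP[a b]; apply/andP; split => //; lia.
Qed.

Lemma levels_bound (R : realFieldType) (V : finType) (ET : {set {set V}}) v0
    (c : {set V} -> R) (M : {set {set V}}) h :
  is_tree ET -> (forall e, e \in ET -> 0 <= c e) ->
  \sum_(1 <= i < h.+1) \sum_(z | (depth ET v0 z == i) && (pe ET v0 z \in M)) ci ET c v0 z
  <= \sum_(z | (z != v0) && (pe ET v0 z \in M)) ci ET c v0 z.
Proof.
move=> tr c0.
under eq_bigr do rewrite big_mkcond.
rewrite exchange_big /= [X in _ <= X]big_mkcond; apply: ler_sum => z _.
case: (pe ET v0 z \in M); rewrite ?andbT ?andbF; last by rewrite big1 // => i _; rewrite andbF.
rewrite (eq_bigr (fun i => if depth ET v0 z == i then ci ET c v0 z else 0)) => [|i _]; last by rewrite andbT.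
rewrite sum_ind_nat //; case: ifP => [/andP[d1 _]|_]; last first.
  by case: ifP => // _; apply: ci_ge0.
rewrite ifT //; rewrite -(depth0P v0 z (tree_conn tr)); lia.
Qed.

Lemma edges_bound (R : realFieldType) (V : finType) (ET : {set {set V}}) v0
    (c : {set V} -> R) (M : {set {set V}}) :
  is_tree ET -> (forall e, e \in ET -> 0 <= c e) ->
  \sum_(z | (z != v0) && (pe ET v0 z \in M)) ci ET c v0 z
  <= \sum_(e | (e \in M) && (e \in ET)) c e.
Proof.
move=> tr c0; have hc := tree_conn tr.
pose Z := [set z | (z != v0) && (pe ET v0 z \in M)].
rewrite (eq_bigl (mem Z)) => [|z]; last by rewrite !inE.
rewrite (eq_bigr (fun z => c (pe ET v0 z))) => [|z zZ]; last first.
  by have : z \in Z := zZ; rewrite inE /ci => /andP[/negbTE -> _].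
rewrite -(big_imset (h := pe ET v0) (A := mem Z) c) /=; last first.
  move=> z z'; rewrite !inE => /andP[zv _] /andP[z'v _].
  by apply: (pe_inj hc); rewrite in_setC1.
apply: sum_sub => [e eZ|e /andP[_ /c0]//].
have : e \in pe ET v0 @: Z := eZ; case/imsetP => z.
by rewrite inE => /andP[zv zM] ->; rewrite zM pe_in.
Qed.
Unset Implicit Arguments. Set Strict Implicit.

Theorem lemma6 (R : realFieldType) (V : finType) (ET : {set {set V}})
    (c gamma : {set V} -> R) (Delta : R) (v0 : V)
    (Fs : {set {set V}}) (ps : {set V} -> R) (r : R) :
  is_tree ET ->
  (forall e, e \in ET -> 0 <= c e) ->
  (forall e, is_pair e -> e \notin ET -> 0 <= gamma e) ->
  is_center ET v0 ->
  optimal ET c gamma Delta Fs ps r ->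
  r <= \sum_(e in ET) c e
       - \sum_(1 <= i < (height ET v0).+1)
           \sum_(H in comps ET v0 Fs i) minc (ci ET c v0) v0 H.
Proof.
move=> tr c0 _ _ [[Fpair _ _] [M [[[Msp Mmin] _] ->]] _].
case: (Msp) => hMs _ hM _.
have Tsp : spanning_tree (ET :|: Fs) ET.
  case: (tr) => sub pr hc card; split => //; exact: subsetUl.
have wle := Mmin ET Tsp.
rewrite [X in _ <= X](eq_bigr c) in wle; last by move=> e eE; rewrite /weight eE.
rewrite [X in X <= _](bigID (fun e => e \in ET)) /= in wle.
set B := \sum_(e in M | e \in ET) weight ET c ps e in wle.
have BE : B = \sum_(e | (e \in M) && (e \in ET)) c e.
  by apply: eq_bigr => e /andP[_ eE]; rewrite /weight eE.
have RE : \sum_(e in M | e \notin ET) weight ET c ps e = rev_of Fs ps M.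
  rewrite /rev_of; apply: eq_big => [e|e /andP[_ eE]]; last by rewrite /weight (negbTE eE).
  rewrite in_setI andbC; case: (boolP (e \in M)) => eM; rewrite ?andbF //=.
  have := subsetP hMs e eM; rewrite in_setU.
  case: (boolP (e \in ET)) => eE /=; last by move->; rewrite andbT.
  by move=> _; apply/esym/negbTE/negP => /andP[eF _]; have [_ ] := Fpair e eF; rewrite eE.
rewrite RE in wle.
have key : \sum_(1 <= i < (height ET v0).+1)
           \sum_(H in comps ET v0 Fs i) minc (ci ET c v0) v0 H <= B.
  rewrite BE; apply: le_trans (edges_bound v0 M tr c0).
  apply: le_trans (levels_bound v0 M (height ET v0) tr c0).
  apply: ler_sum_nat => i /andP[i1 _].
  exact: level_bound tr hM hMs c0 i1.
rewrite lerBrDr; apply: le_trans (lerD (lexx _) key) _.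
by rewrite addrC.
Qed.
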